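(* Let $3 \le k \le n$ and break the segment $[0,1]$ at $n-1$ independent uniformly random points into $n$ pieces. For every integer $m$ with $0 \le m \le \binom{n}{k}$, the probability that exactly $m$ of the $k$-element subsets of the $n$ pieces can form a $k$-gon is nonzero. Equivalently, $P(k,n,0) > 0$ and $P(k,n,m-1) - P(k,n,m) > 0$ for all $0 < m \le \binom nk$, where $P(k,n,m)$ is the probability that at least $m$ of the $k$-element subsets of pieces can form a $k$-gon.
   Context: A collection of $k$ lengths can form a (nondegenerate) $k$-gon iff each length is less than the sum of the other $k-1$. *)

(* Defs.v *)
From HB Require Import structures.
From mathcomp Require Import all_boot all_order all_algebra.
From mathcomp Require Import all_classical all_reals all_analysis.
Set Implicit Arguments. Unset Strict Implicit. Unset Printing Implicit Defensive.
Import Order.TTheory GRing.Theory Num.Theory.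
Local Open Scope ring_scope.

Section Defs.
Variable R : realType.

(* Iterated integral over [0,1]^j of a function of j real variables
   (given as a sequence): this is the expectation of f(U_1,...,U_j) for
   independent uniform U_i on [0,1] (product Lebesgue measure, by Tonelli). *)
Fixpoint cube_int (j : nat) (f : seq R -> \bar R) : \bar R :=
  match j with
  | 0 => f [::]
  | j'.+1 => (\int[@lebesgue_measure R]_(x in `[0%R, 1%R]) cube_int j' (fun s => f (x :: s)))%E
  end.

Definition cut_points (xs : seq R) : seq R := sort <=%R (0 :: 1 :: xs).

Definition piece (n : nat) (xs : seq R) (i : 'I_n) : R :=
  (cut_points xs)`_(i.+1) - (cut_points xs)`_i.

Definition forms_polygon (n : nat) (xs : seq R) (S : {set 'I_n}) : bool :=
  [forall i in S, piece xs i < \sum_(j in S | j != i) piece xs j].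

Definition num_polygons (n k : nat) (xs : seq R) : nat :=
  #|[set S : {set 'I_n} | (#|S| == k) && forms_polygon xs S]|.

Definition prob_exactly (n k m : nat) : \bar R :=
  cube_int n.-1 (fun xs => (if num_polygons n k xs == m then 1 else 0)%:E).

End Defs.

(* Main.v *)
Require Import Defs.
From HB Require Import structures.
From mathcomp Require Import all_boot all_order all_algebra.
From mathcomp Require Import all_classical all_reals all_analysis.
Import Order.TTheory GRing.Theory Num.Theory.
Local Open Scope ring_scope.
From mathcomp Require Import zify ring lra.
Local Close Scope ring_scope.
Set Implicit Arguments. Unset Strict Implicit.
Lemma ivt (g : nat -> nat) M c : (forall t, t < M -> g t <= (g t.+1).+1) ->
  g M <= c -> c <= g 0 -> exists2 t, t <= M & g t = c.
Proof.
move=> step gM c0.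
have ex : exists t, (t <= M) && (g t <= c) by exists M; rewrite leqnn.
case: (ex_minnP ex) => t /andP[tM gtc] tmin; exists t => //.
case: t tM gtc tmin => [|t] tM gtc tmin; first by apply/eqP; rewrite eqn_leq gtc.
have : ~~ (g t <= c).
  apply/negP => h; have := tmin t; rewrite (ltnW tM) h => /(_ isT); by rewrite ltnn.
have := step t tM; lia.
Qed.

Lemma bits n (f g : 'I_n -> bool) :
  \sum_(i < n) f i * 2 ^ i = \sum_(i < n) g i * 2 ^ i -> forall i, f i = g i.
Proof.
elim: n f g => [|n IH] f g E i; first by case: i.
have e (h : 'I_n.+1 -> bool) : \sum_(i < n) h (lift ord0 i) * 2 ^ (lift ord0 i)
    = 2 * \sum_(i < n) h (lift ord0 i) * 2 ^ i.
  by rewrite big_distrr; apply: eq_bigr => l _; rewrite /= expnS mulnCA.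
move: E; rewrite !big_ord_recl !e /= expn0 !muln1 => E.
have E0 : f ord0 = g ord0.
  move: (E); case: (f ord0); case: (g ord0) => //= /(congr1 odd);
  by rewrite !oddD /= !addbF !addbb.
have E1 : \sum_(i < n) f (lift ord0 i) * 2 ^ i = \sum_(i < n) g (lift ord0 i) * 2 ^ i.
  by move: E; rewrite E0 => /addnI /eqP; rewrite eqn_mul2l /= => /eqP.
case: (unliftP ord0 i) => [i' ->|->] //.
exact: (IH (fun i => f (lift ord0 i)) (fun i => g (lift ord0 i)) E1).
Qed.

Lemma card_lt n m : m <= n -> #|[set i : 'I_n | i < m]| = m.
Proof.
elim: m => [|m IH] mn.
  by apply: eq_card0 => i; rewrite inE.
have -> : [set i : 'I_n | i < m.+1] = (Ordinal mn) |: [set i : 'I_n | i < m].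
  by apply/setP => i; rewrite !inE ltnS leq_eqVlt -val_eqE.
by rewrite cardsU1 inE ltnn IH // ltnW.
Qed.

Section Comb.
Variables (n k j : nat).
Hypotheses (k3 : 2 < k) (kn : k <= n) (jn : j < n).

Definition cB := 2 ^ n.+1.
Definition cM := n * 2 ^ n + 1.
Definition cH := k * cB + cM + 1.
Definition bb (th l : nat) :=
  if l < j then cB + 2 ^ l else if l == j then (k - 1) * cB + th else cH * n.+1 ^ l.
Definition polyB (b : nat -> nat) (S : {set 'I_n}) :=
  [forall i in S, b i <= \sum_(l in S | l != i) b l].
Definition NN (T : {set 'I_n}) := \sum_(i in T) 2 ^ i.
Definition j0 : 'I_n := Ordinal jn.
Definition Ap := [set i : 'I_n | i <= j].

Lemma sum_D1 (F : 'I_n -> nat) (S : {set 'I_n}) (i : 'I_n) :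
  \sum_(l in S | l != i) F l = \sum_(l in S :\ i) F l.
Proof. by apply: eq_bigl => l; rewrite in_setD1 andbC. Qed.

Lemma pow_lt_B l : l <= n -> 2 ^ l < cB.
Proof. move=> ln; rewrite /cB ltn_exp2l //; lia. Qed.

Lemma bb_ge th l : cB <= bb th l.
Proof.
rewrite /bb; case: ifP => _; first exact: leq_addr.
case: ifP => _.
  apply: (@leq_trans ((k - 1) * cB)); last exact: leq_addr.
  by rewrite leq_pmull // subn_gt0 ltnW // ltnW.
apply: (@leq_trans cH).
  by rewrite /cH -addnA (leq_trans _ (leq_addr _ _)) // leq_pmull // ltnW // ltnW.
by apply: leq_pmulr; rewrite expn_gt0.
Qed.

Lemma NN_lt T : NN T < cM.
Proof.
rewrite /NN /cM addn1 ltnS big_mkcond /=.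
apply: leq_trans (_ : \sum_(i < n) 2 ^ n <= _); last by rewrite sum_nat_const card_ord.
apply: leq_sum => i _; case: (i \in T) => //; rewrite leq_exp2l //; exact: ltnW.
Qed.

Lemma NN_inj T1 T2 : NN T1 = NN T2 -> T1 = T2.
Proof.
have E T : NN T = \sum_(i < n) (i \in T) * 2 ^ i.
  by rewrite /NN big_mkcond; apply: eq_bigr => i _; case: (i \in T); rewrite ?mul1n ?mul0n.
rewrite !E => /bits H; apply/setP => i; exact: H.
Qed.

Lemma small th (S : {set 'I_n}) (i : 'I_n) : #|S| = k -> i \in S -> i < j ->
  bb th i <= \sum_(l in S :\ i) bb th l.
Proof.
move=> Sk iS ij.
have : #|S :\ i| * cB <= \sum_(l in S :\ i) bb th l.
  by rewrite -sum_nat_const; apply: leq_sum => l _; exact: bb_ge.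
have := cardsD1 i S; rewrite iS Sk /= add1n => ck.
have := pow_lt_B (ltnW (ltn_ord i)).
have c2 : 2 <= #|S :\ i|.
  move: k3; rewrite ck; move: (#|S :\ i|) => c. lia.
have := leq_mul c2 (leqnn cB).
rewrite /bb ij; move: (2 ^ i) (\sum_(l in S :\ i) bb th l) (#|S :\ i| * cB) => x y z.
clear; lia.
Qed.

Lemma sum_j0 th (S : {set 'I_n}) : S \subset Ap ->
  \sum_(l in S :\ j0) bb th l = #|S :\ j0| * cB + NN (S :\ j0).
Proof.
move=> sub; rewrite /NN -sum_nat_const -big_split /=; apply: eq_bigr => l.
rewrite in_setD1 => /andP[lj lS]; have := fintype.subsetP sub l lS; rewrite inE => lej.
have ltj : l < j by rewrite ltn_neqAle lej andbT; move: lj; apply: contra => /eqP e; apply/eqP/val_inj.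
by rewrite /bb ltj.
Qed.

Lemma char th (S : {set 'I_n}) : th <= cM -> #|S| = k ->
  polyB (bb th) S = (S \subset Ap) && ((j0 \in S) ==> (th <= NN (S :\ j0))).
Proof.
move=> thM Sk.
have bj0 : bb th j0 = (k - 1) * cB + th by rewrite /bb /= ltnn eqxx.
apply/idP/idP.
- move=> P.
  have sub : S \subset Ap.
    apply/negPn/negP => /fintype.subsetPn [i1 i1S]; rewrite inE -ltnNge => ji1.
    case: (@arg_maxnP _ i1 (mem S) (fun i : 'I_n => val i) i1S) => im imS immax.
    have jim : j < im by apply: leq_trans ji1 (immax _ i1S).
    move/forallP: P => /(_ im) /implyP /(_ imS) P.
    move: P; apply/negP; rewrite -ltnNge.
    have bim : bb th im = cH * n.+1 ^ im.
      by rewrite /bb ltnNge (ltnW jim) /= gtn_eqF.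
    rewrite bim sum_D1.
    move Eim : (val im) => p; case: p Eim => [|p] Eim; first by move: jim; rewrite Eim.
    apply: (@leq_trans (\sum_(l in S :\ im) cH * n.+1 ^ p).+1).
      rewrite ltnS; apply: leq_sum => l; rewrite in_setD1 => /andP[lim lS].
      have llp : l <= p.
        have := immax l lS; rewrite /geq /= Eim leq_eqVlt ltnS => /orP[/eqP e|//].
        by move: lim; rewrite -val_eqE /= e Eim eqxx.
      have cHp : cH <= cH * n.+1 ^ p by apply: leq_pmulr; rewrite expn_gt0.
      rewrite /bb; case: ifP => lj.
        apply: leq_trans cHp; have := pow_lt_B (ltnW (ltn_ord l)); rewrite /cH; nia.
      case: ifP => lj2.
        apply: leq_trans cHp; rewrite /cH; nia.
      by rewrite leq_mul2l leq_pexp2l // orbT.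
    rewrite sum_nat_const expnS mulnCA.
    have cn : #|S :\ im| <= n by rewrite -[X in _ <= X]card_ord max_card.
    have pos : 0 < cH * n.+1 ^ p by rewrite muln_gt0 expn_gt0 /cH addn1.
    rewrite [X in _ <= X]mulnC; nia.
  rewrite sub /=; apply/implyP => j0S.
  move/forallP: P => /(_ j0); rewrite j0S /= sum_D1 sum_j0 // bj0.
  have := cardsD1 j0 S; rewrite j0S Sk add1n => -> /=.
  by rewrite subn1 leq_add2l.
- case/andP => sub imp; apply/forallP => i; apply/implyP => iS.
  rewrite sum_D1.
  have := fintype.subsetP sub i iS; rewrite inE leq_eqVlt => /orP[/eqP eij|lt]; last exact: small.
  have -> : i = j0 by apply: val_inj.
  have j0S : j0 \in S by rewrite -(_ : i = j0) //; apply: val_inj.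
  rewrite sum_j0 // bj0; have := cardsD1 j0 S; rewrite j0S Sk add1n => -> /=.
  by rewrite subn1 leq_add2l; move/implyP: imp; apply.
Qed.

Definition Fc th := #|[set S : {set 'I_n} | (#|S| == k) && polyB (bb th) S]|.

Lemma Fc_eq th : th <= cM -> Fc th = #|[set S : {set 'I_n} |
   (#|S| == k) && ((S \subset Ap) && ((j0 \in S) ==> (th <= NN (S :\ j0))))]|.
Proof. move=> thM; apply: eq_card => S; rewrite !inE; case: eqP => //= Sk; exact: char. Qed.

Lemma card_Ap : #|Ap| = j.+1.
Proof.
have -> : Ap = [set i : 'I_n | i < j.+1] by apply/setP => i; rewrite !inE ltnS.
exact: card_lt.
Qed.

Lemma F0 : Fc 0 = 'C(j.+1, k).
Proof.
rewrite Fc_eq // -card_Ap -cards_draws; apply: eq_card => S; rewrite !inE /= andbC.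
by rewrite implybT andbT.
Qed.

Lemma FM : Fc cM = 'C(j, k).
Proof.
rewrite Fc_eq // -(card_lt (ltnW jn)) -cards_draws; apply: eq_card => S; rewrite !inE.
have -> : (cM <= NN (S :\ j0)) = false by apply/negbTE; rewrite -ltnNge NN_lt.
rewrite implybF [RHS]andbC; congr andb.
apply/andP/fintype.subsetP => [[/fintype.subsetP sub nj0] i iS | sub].
  rewrite inE; have := sub i iS; rewrite inE leq_eqVlt => /orP[/eqP e|//].
  by move: nj0; rewrite (_ : j0 = i) ?iS //; apply: val_inj.
split.
  by apply/fintype.subsetP => i /sub; rewrite !inE; exact: ltnW.
by apply/negP => /sub; rewrite inE /= ltnn.
Qed.

Lemma Fstep th : th < cM -> Fc th <= (Fc th.+1).+1.
Proof.
move=> thM; rewrite !Fc_eq // ?(ltnW thM) //.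
set X1 := [set S | _]; set X2 := [set S | _].
pose Y := [set S : {set 'I_n} | (j0 \in S) && (NN (S :\ j0) == th)].
have sub : X1 \subset X2 :|: Y.
  apply/fintype.subsetP => S; rewrite !inE => /andP[Sk /andP[sub imp]].
  rewrite Sk sub /=; case j0S: (j0 \in S) => //=.
  by move: imp; rewrite j0S /= leq_eqVlt => /orP[/eqP ->|->]; rewrite ?eqxx ?orbT.
have cY : #|Y| <= 1.
  apply/card_le1_eqP => S1 S2; rewrite !inE => /andP[h1 /eqP e1] /andP[h2 /eqP e2].
  rewrite -(finset.setD1K h1) -(finset.setD1K h2); congr (_ |: _); apply: NN_inj; by rewrite e1 e2.
apply: leq_trans (subset_leq_card sub) _; rewrite cardsU.
move: cY; move: #|X2| #|Y| #|X2 :&: Y| => x y z; clear; lia.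
Qed.

End Comb.


Definition polyN (n : nat) (a : nat -> nat) (S : {set 'I_n}) :=
  [forall i in S, a i < \sum_(l in S | l != i) a l].

Lemma keyN k b s : 2 < k ->
  ((1 + k * b < (k - 1) + k * s) = (b <= s)) /\ (1 + k * b != (k - 1) + k * s).
Proof.
move=> k3; case: (leqP b s) => h.
  have := leq_mul (leqnn k) h; move: (k * b) (k * s) => x y; clear h; lia.
have := leq_mul (leqnn k) h; rewrite mulnS; move: (k * b) (k * s) => x y; clear h; lia.
Qed.

Lemma sumA n k (b : nat -> nat) (S : {set 'I_n}) (i : 'I_n) : #|S| = k -> i \in S ->
  \sum_(l in S | l != i) (1 + k * b l) = (k - 1) + k * \sum_(l in S | l != i) b l.
Proof.
move=> Sk iS; rewrite !sum_D1 big_split /= sum_nat_const big_distrr /= muln1.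
by have := cardsD1 i S; rewrite iS Sk /= add1n => ->; rewrite subn1.
Qed.

Theorem comb n k m : 2 < k -> k <= n -> m <= 'C(n, k) ->
  exists a : nat -> nat, [/\ forall l, 0 < a l,
    forall (S : {set 'I_n}) (i : 'I_n), #|S| = k -> i \in S ->
       a i != \sum_(l in S | l != i) a l &
    #|[set S : {set 'I_n} | (#|S| == k) && polyN a S]| = m].
Proof.
move=> k3 kn mC.
have n0 : 0 < n by apply: leq_trans kn; apply: leq_trans k3.
have ex : exists t, (t < n) && (m <= 'C(t.+1, k)).
  by exists n.-1; rewrite prednK // leqnn.
case: (ex_minnP ex) => j /andP[jn mj] jmin.
have lo : 'C(j, k) <= m.
  case: j jn mj jmin => [|j'] jn mj jmin; first by rewrite bin0n gtn_eqF // ltnW // ltnW.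
  rewrite leqNgt; apply/negP => h.
  have := jmin j'; rewrite (ltnW jn) (ltnW h) => /(_ isT); by rewrite ltnn.
have [th thM Fth] : exists2 t, t <= cM n & Fc n k j t = m.
  apply: ivt.
  - by move=> t ht; apply: Fstep.
  - by rewrite FM.
  - by rewrite F0.
exists (fun l => 1 + k * bb n k j th l); split.
- by [].
- move=> S i Sk iS; rewrite sumA //; exact: (keyN _ _ k3).2.
rewrite -Fth; apply: eq_card => S; rewrite !inE; case: eqP => //= /eqP Sk.
rewrite /polyN /polyB; apply: eq_forallb => i; case iS: (i \in S) => //=.
rewrite sumA //; last exact/eqP.
exact: (keyN _ _ k3).1.
Qed.
Unset Implicit Arguments. Set Strict Implicit.
Local Open Scope ring_scope.
Section S.
Variable R : realType.
Import HBNNSimple.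

Lemma integral_lb (g : R -> \bar R) (l h c : R) : 0 <= l -> l < h -> h <= 1 -> 0 <= c ->
  (forall x, (0 <= g x)%E) -> (forall x, l <= x <= h -> (c%:E <= g x)%E) ->
  ((c * (h - l))%:E <= \int[@lebesgue_measure R]_(x in `[0%R, 1%R]) g x)%E.
Proof.
move=> l0 lh h1 c0 g0 gc.
rewrite ge0_integralE; last by move=> x _; exact: g0.
apply: ereal_sup_ubound => /=.
unshelve eexists (@scale_nnsfun _ (g_sigma_algebraType R.-ocitv.-measurable) R (@indic_nnsfun _ (g_sigma_algebraType R.-ocitv.-measurable) R (`[l,h]%classic) _) c c0).
  exact: measurable_itv.
  move=> x /=. rewrite /patch /measurable_realfun.mindic indicE.
  have [xlh|xlh] := boolP (x \in `[l, h]%classic).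
    have xlh' : l <= x <= h by move: xlh; rewrite inE /= in_itv.
    have -> : x \in `[0%R, 1%R]%classic.
      rewrite inE /= in_itv /=; case/andP: xlh' => a b.
      by rewrite (le_trans l0 a) (le_trans b h1).
    by rewrite mulr1; exact: gc.
  rewrite mulr0; case: ifP => _; [exact: g0|exact: lexx].
rewrite -integralT_nnsfun /=.
under eq_integral => x _ do rewrite /measurable_realfun.mindic.
rewrite (@integralZl_indic _ (g_sigma_algebraType R.-ocitv.-measurable) R lebesgue_measure setT measurableT (fun _ => `[l,h]%classic) c); last 2 first.
    by move=> c0'; exfalso; move: c0; rewrite leNgt c0'.
  exact: measurable_itv.
rewrite (@integral_indic _ (g_sigma_algebraType R.-ocitv.-measurable) R lebesgue_measure setT measurableT); last exact: measurable_itv.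
rewrite setIT EFinM; congr (_ * _)%E.
have := lebesgue_measure_itv `[l, h]; rewrite /= lte_fin lh -EFinB => <-.
reflexivity.
Qed.
End S.
Lemma cube_ge0 (R : realType) j (f : seq R -> \bar R) : (forall s, (0 <= f s)%E) -> (0 <= cube_int j f)%E.
Proof.
elim: j f => [|j IH] f f0 /=; first exact: f0.
apply: integral_ge0 => x _; exact: IH.
Qed.

Lemma cube_lb (R : realType) j (f : seq R -> \bar R) (lo hi : nat -> R) :
  (forall t, (t < j)%N -> [/\ 0 <= lo t, lo t < hi t & hi t <= 1]) ->
  (forall s, (0 <= f s)%E) ->
  (forall s, size s = j -> (forall t, (t < j)%N -> lo t <= s`_t <= hi t) -> (1 <= f s)%E) ->
  ((\prod_(t < j) (hi t - lo t))%:E <= cube_int j f)%E.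
Proof.
elim: j f lo hi => [|j IH] f lo hi Hb f0 f1 /=.
  by rewrite big_ord0; apply: f1 => // t.
rewrite big_ord_recl mulrC.
have [l0 lh h1] := Hb 0%N isT.
apply: integral_lb => //.
- apply: prodr_ge0 => i _; rewrite subr_ge0 ltW //.
  by have [] := Hb (lift ord0 i) (ltn_ord (lift ord0 i)).
- by move=> x; apply: cube_ge0 => s; exact: f0.
move=> x xb.
apply: (IH (fun s => f (x :: s)) (fun t => lo t.+1) (fun t => hi t.+1)).
- by move=> t tj; apply: Hb.
- by move=> s; exact: f0.
move=> s ss sb; apply: f1; first by rewrite /= ss.
by case=> [|t] //= /sb.
Qed.
Section Robust.
Variable R : realType.

Lemma robust (n : nat) (q : 'I_n -> R) (a : nat -> nat) (Tr eps : R)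
    (S : {set 'I_n}) (i : 'I_n) :
  0 < Tr -> 0 <= eps -> eps + n%:R * eps < 1 ->
  (forall l : 'I_n, `|Tr * q l - (a l)%:R| <= eps) ->
  (a i != \sum_(l in S | l != i) a l)%N ->
  (q i < \sum_(l in S | l != i) q l) = (a i < \sum_(l in S | l != i) a l)%N.
Proof.
move=> Tr0 eps0 epsn H tie.
set A1 := (\sum_(l in S | l != i) a l)%N.
have E : Tr * \sum_(l in S | l != i) q l =
    A1%:R + \sum_(l in S | l != i) (Tr * q l - (a l)%:R).
  rewrite mulr_sumr /A1 natr_sum -big_split /=; apply: eq_bigr => l _.
  by rewrite addrC subrK.
have Eb : `|\sum_(l in S | l != i) (Tr * q l - (a l)%:R)| <= n%:R * eps.
  apply: le_trans (ler_norm_sum _ _ _) _.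
  rewrite big_mkcond /=.
  apply: le_trans (_ : \sum_(l < n) eps <= _); last by rewrite sumr_const card_ord mulr_natl.
  apply: ler_sum => l _; case: ifP => _ //; exact: H.
have Hi := H i.
rewrite -(ltr_pM2l Tr0) E.
move: Eb Hi; rewrite !ler_norml.
move: (\sum_(l in S | l != i) (Tr * q l - (a l)%:R)) (Tr * q i) => y x.
case: (ltngtP (a i) A1) => h.
- have h' : (a i)%:R + 1 <= A1%:R :> R by rewrite natr1 ler_nat.
  move=> /andP[y1 y2] /andP[x1 x2]; apply/idP; lra.
- have h' : A1%:R + 1 <= (a i)%:R :> R by rewrite natr1 ler_nat.
  move=> /andP[y1 y2] /andP[x1 x2]; apply/negbTE; rewrite -leNgt; lra.
- by move: tie; rewrite h eqxx.
Qed.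
End Robust.
Section Samp.
Variable R : realType.
Variables (n : nat) (a : nat -> nat).
Hypothesis a0 : forall l, (0 < a l)%N.
Hypothesis n0 : (0 < n)%N.

Definition cum t := (\sum_(l < t) a l)%N.
Definition Tr : R := (cum n)%:R.
Definition Cc t : R := (cum t)%:R / Tr.
Definition dl : R := ((8 * n)%:R)^-1 / Tr.
Definition lo t := Cc t.+1 - dl.
Definition hi t := Cc t.+1 + dl.

Lemma cumS t : cum t.+1 = (cum t + a t)%N.
Proof. by rewrite /cum big_ord_recr. Qed.

Lemma cum_mono u v : (u <= v)%N -> (cum u <= cum v)%N.
Proof.
elim: v => [|v IH]; first by rewrite leqn0 => /eqP ->.
rewrite leq_eqVlt => /orP[/eqP ->//|]; rewrite ltnS => /IH h.
by rewrite cumS (leq_trans h) // leq_addr.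
Qed.

Lemma Tr_gt0 : 0 < Tr.
Proof.
rewrite /Tr ltr0n; case: n n0 => // n' _.
by rewrite cumS addn_gt0 a0 orbT.
Qed.

Lemma Cc0 : Cc 0 = 0.
Proof. by rewrite /Cc /cum big_ord0 mul0r. Qed.

Lemma Ccn : Cc n = 1.
Proof. by rewrite /Cc -/Tr divff // gt_eqF // Tr_gt0. Qed.

Lemma CcS t : Cc t.+1 = Cc t + (a t)%:R / Tr.
Proof. by rewrite /Cc cumS natrD mulrDl. Qed.

Lemma CcS_ge t : Cc t + Tr^-1 <= Cc t.+1.
Proof.
rewrite CcS lerD2l ler_pdivlMr ?Tr_gt0 // mulVf ?gt_eqF ?Tr_gt0 //.
by rewrite ler1n.
Qed.

Lemma Cc_ge0 t : 0 <= Cc t.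
Proof. by rewrite /Cc divr_ge0 // ltW // Tr_gt0. Qed.

Lemma Cc_le t : (t < n)%N -> Cc t + Tr^-1 <= 1.
Proof.
move=> tn; apply: le_trans (CcS_ge t) _; rewrite -Ccn /Cc.
by apply: ler_wpM2r; [rewrite invr_ge0 ltW // Tr_gt0 | rewrite ler_nat cum_mono].
Qed.

Lemma dl_gt0 : 0 < dl.
Proof. by rewrite /dl divr_gt0 ?Tr_gt0 // invr_gt0 ltr0n muln_gt0. Qed.

Lemma dl_le : 8 * dl <= Tr^-1.
Proof.
rewrite /dl mulrA -[X in _ <= X]mul1r; apply: ler_wpM2r; first by rewrite invr_ge0 ltW // Tr_gt0.
rewrite ler_pdivrMr ?ltr0n ?muln_gt0 // mul1r natrM ler_peMr //.
by rewrite ler1n.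
Qed.

Lemma Tr_dl : Tr * (2 * dl) = 2 * ((8 * n)%:R)^-1.
Proof.
have := Tr_gt0; rewrite /dl => h; field; rewrite -/Tr; apply/andP; split; rewrite gt_eqF // ?ltr0n; exact: n0.
Qed.

Lemma box_ok t : (t < n.-1)%N -> [/\ 0 <= lo t, lo t < hi t & hi t <= 1].
Proof.
move=> tn; have := dl_gt0; have := dl_le; have := @Cc_le t.+1.
have := CcS_ge t; have := Cc_ge0 t.
rewrite /lo /hi; have tn' : (t.+1 < n)%N by rewrite -ltn_predRL.
move=> h1 h2 /(_ tn') h3 h4 h5.
have h6 : 0 < Tr^-1 by rewrite invr_gt0 Tr_gt0.
split; lra.
Qed.

Definition cutl (s : seq R) := 0 :: rcons s 1.

Lemma near s : size s = n.-1 -> (forall t, (t < n.-1)%N -> lo t <= s`_t <= hi t) ->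
  forall t, (t <= n)%N -> `|(cutl s)`_t - Cc t| <= dl.
Proof.
move=> ss box [|t] tn /=.
  by rewrite Cc0 subr0 normr0 ltW // dl_gt0.
rewrite nth_rcons ss; case: ltnP => h.
  by have := box t h; rewrite /lo /hi ler_norml => /andP[h1 h2]; apply/andP; split; lra.
have -> : t = n.-1 by apply/eqP; rewrite eqn_leq h andbT -ltnS prednK.
by rewrite eqxx prednK // Ccn subrr normr0 ltW // dl_gt0.
Qed.

Lemma cut_sorted s : size s = n.-1 -> (forall t, (t < n.-1)%N -> lo t <= s`_t <= hi t) ->
  sorted <=%R (cutl s).
Proof.
move=> ss box; apply/(sortedP 0) => t.
rewrite /cutl /= size_rcons ss prednK // ltnS => tn.
have := near s ss box _ (ltnW tn); have := near s ss box _ tn.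
have := CcS_ge t; have := dl_le; have := dl_gt0.
rewrite !ler_norml => h1 h2 h3 /andP[h4 h5] /andP[h6 h7]; lra.
Qed.

Lemma cut_pointsE s : sorted <=%R (cutl s) -> cut_points s = cutl s.
Proof.
move=> H; rewrite /cut_points; apply: (sorted_eq le_trans le_anti) => //.
  by apply: sort_sorted => x y; exact: le_total.
by rewrite perm_sort /cutl perm_cons perm_sym perm_rcons perm_refl.
Qed.

Lemma piece_err s : size s = n.-1 -> (forall t, (t < n.-1)%N -> lo t <= s`_t <= hi t) ->
  forall i : 'I_n, `|Tr * piece s i - (a i)%:R| <= 2 * ((8 * n)%:R)^-1.
Proof.
move=> ss box i; rewrite /piece cut_pointsE ?cut_sorted //.
have := near s ss box _ (ltn_ord i); have := near s ss box _ (ltnW (ltn_ord i)).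
have e : (a i)%:R = Tr * (Cc i.+1 - Cc i).
  by rewrite CcS addrC addKr mulrCA divff ?mulr1 // gt_eqF // Tr_gt0.
rewrite e -Tr_dl -mulrBr normrM gtr0_norm ?Tr_gt0 // ler_pM2l ?Tr_gt0 //.
move: ((cutl s)`_i.+1) ((cutl s)`_i) => x y.
rewrite !ler_norml => /andP[h1 h2] /andP[h3 h4]; apply/andP; split; lra.
Qed.

End Samp.
Lemma eps_ok (R : realType) (n : nat) : (0 < n)%N ->
  0 <= 2 * ((8 * n)%:R)^-1 :> R /\
  2 * ((8 * n)%:R)^-1 + n%:R * (2 * ((8 * n)%:R)^-1) < 1 :> R.
Proof.
move=> n0.
have N0 : 0 < n%:R :> R by rewrite ltr0n.
have N1 : 1 <= n%:R :> R by rewrite ler1n.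
have e1 : 2 * ((8 * n)%:R)^-1 = 4^-1 / n%:R :> R.
  by rewrite natrM; field; rewrite gt_eqF.
have e : n%:R * (2 * ((8 * n)%:R)^-1) = 4^-1 :> R.
  by rewrite e1; field; rewrite gt_eqF.
have e2 : 4^-1 / n%:R <= 4^-1 :> R.
  by rewrite ler_pdivrMr // ler_peMr.
have e3 : 0 <= 4^-1 / n%:R :> R by rewrite divr_ge0 // ltW.
rewrite e e1; split => //; lra.
Qed.

Theorem mainTheorem8 (R : realType) (k n m : nat) :
  (3 <= k)%N -> (k <= n)%N -> (m <= 'C(n, k))%N ->
  (0 < prob_exactly R n k m)%E.
Proof.
move=> k3 kn mC.
have [a [a0 tie cnt]] := comb k3 kn mC.
have n0 : (0 < n)%N by apply: leq_trans kn; apply: leq_trans k3.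
have [eps0 epsn] := eps_ok R n n0.
have count s : size s = n.-1 -> (forall t, (t < n.-1)%N -> lo R n a t <= s`_t <= hi R n a t) ->
    num_polygons n k s = m.
  move=> ss sb.
  rewrite /num_polygons -cnt; apply: eq_card => S; rewrite !inE.
  case: eqP => //= Sk.
  rewrite /forms_polygon /polyN; apply: eq_forallb => i; case iS: (i \in S) => //=.
  apply: (@robust R n (piece s) a (Tr R n a) (2 * ((8 * n)%:R)^-1)) => //.
  - exact: Tr_gt0.
  - exact: piece_err.
  - exact: tie.
rewrite /prob_exactly.
have H := @cube_lb R n.-1 (fun xs => (if num_polygons n k xs == m then 1 else 0)%:E)
  (lo R n a) (hi R n a).
apply: lt_le_trans (H _ _ _).
- rewrite lte_fin; apply: prodr_gt0 => t _; rewrite /lo /hi.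
  have := @dl_gt0 R n a a0 n0; lra.
- by move=> t tn; apply: box_ok.
- by move=> s; case: ifP.
- by move=> s ss sb; rewrite count // eqxx.
Qed.
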